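(* Let $\varphi$ be an $AB\bar B$-formula and let $\mathcal{G}=(\mathbb{P}_N,\mathcal{L})$ be a $\varphi$-compass structure of finite length $N<\omega$ such that $\varphi\in\mathcal{L}(0,y)$ for some $0<y<N$. If there exist rows $0<y_0<y_1<N$ with $Shading_{\mathcal{G}}(y_0)\subseteq Shading_{\mathcal{G}}(y_1)$, then there exists a $\varphi$-compass structure $\mathcal{G}'$ of length $N'<N$ that features $\varphi$.
   Context: $AB\bar B$-formulas are built from propositional variables using $\neg$, $\vee$, and unary modalities $\langle A\rangle,\langle B\rangle,\langle\bar B\rangle$ ($[R]\psi=\neg\langle R\rangle\neg\psi$). The closure $Cl(\varphi)$ is the set of subformulas of $\varphi$ and their negations (identifying $\neg\neg\alpha$ with $\alpha$, $\neg\langle R\rangle\alpha$ with $[R]\neg\alpha$). The extended closure $Cl^+(\varphi)$ is $Cl(\varphi)$ together with all $\langle R\rangle\alpha$ and $\neg\langle R\rangle\alpha$ for $R\in\{A,B,\bar B\}$, $\alpha\in Cl(\varphi)$. A $\varphi$-atom is a nonempty $F\subseteq Cl^+(\varphi)$ such that for every $\alpha\in Cl^+(\varphi)$, $\alpha\in F$ iff $\neg\alpha\notin F$, and for every $\alpha\vee\beta\in Cl^+(\varphi)$, $\alpha\vee\beta\in F$ iff $\alpha\in F$ or $\beta\in F$. For an atom $F$: $obs(F)=\{\alpha\in Cl(\varphi):\alpha\in F\}$ and $Req_R(F)=\{\alpha\in Cl(\varphi):\langle R\rangle\alpha\in F\}$. Define $F\leadsto_A G$ iff $Req_A(F)=obs(G)\cup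 Req_B(G)\cup Req_{\bar B}(G)$; and $F\leadsto_B G$ iff $obs(F)\cup Req_{\bar B}(F)\subseteq Req_{\bar B}(G)\subseteq obs(F)\cup Req_{\bar B}(F)\cup Req_B(F)$ and $obs(G)\cup Req_B(G)\subseteq Req_B(F)\subseteq obs(G)\cup Req_B(G)\cup Req_{\bar B}(G)$. For $N\le\omega$ (identified with $\{0,\dots,N-1\}$), $\mathbb{P}_N=\{(x,y):0\le x<y<N\}$, with relations $(x,y)\,A\,(x',y')$ iff $y=x'$; $(x,y)\,B\,(x',y')$ iff $x=x'$ and $y'<y$; $(x,y)\,\bar B\,(x',y')$ iff $x=x'$ and $y<y'$. A $\varphi$-compass structure of length $N$ is $\mathcal{G}=(\mathbb{P}_N,\mathcal{L})$ with $\mathcal{L}$ mapping points to $\varphi$-atoms such that (consistency) $p\,R\,q$ implies $\mathcal{L}(p)\leadsto_R\mathcal{L}(q)$ for $R\in\{A,B\}$, and (fulfillment) for every $p$, $R\in\{A,B,\bar B\}$, $\alpha\in Req_R(\mathcal{L}(p))$ there is $q$ with $p\,R\,q$ and $\alpha\in obs(\mathcal{L}(q))$. $\mathcal{G}$ features $\alpha$ if $\alpha\in\mathcal{L}(p)$ for some point $p$. The shading of row $y$ is $Shading_{\mathcal{G}}(y)=\{\mathcal{L}(x,y):0\le x<y\}$. *)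

(* Defs.v *)
From Stdlib Require Import List Arith.
Import ListNotations.

Inductive rel := RA | RB | RBb.

Inductive formula :=
| Var : nat -> formula
| Neg : formula -> formula
| Or : formula -> formula -> formula
| Dia : rel -> formula -> formula.

Definition neg (f : formula) : formula :=
  match f with Neg g => g | _ => Neg f end.

(* normal form: no double negations; realizes the identification
   neg neg a = a (and hence neg <R> a = [R] neg a) *)
Fixpoint norm (f : formula) : formula :=
  match f with
  | Var p => Var p
  | Neg g => neg (norm g)
  | Or a b => Or (norm a) (norm b)
  | Dia R a => Dia R (norm a)
  end.

Fixpoint subf (f : formula) : list formula :=
  match f with
  | Var p => [Var p]
  | Neg g => Neg g :: subf g
  | Or a b => Or a b :: subf a ++ subf b
  | Dia R a => Dia R a :: subf a
  end.

Definition InCl (phi a : formula) : Prop :=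
  exists b, In b (subf (norm phi)) /\ (a = b \/ a = neg b).

Definition InClp (phi a : formula) : Prop :=
  InCl phi a \/
  exists R b, InCl phi b /\ (a = Dia R b \/ a = Neg (Dia R b)).

Definition atom (phi : formula) (F : formula -> Prop) : Prop :=
  (exists a, F a) /\
  (forall a, F a -> InClp phi a) /\
  (forall a, InClp phi a -> (F a <-> ~ F (neg a))) /\
  (forall a b, InClp phi (Or a b) -> (F (Or a b) <-> F a \/ F b)).

Definition obs (phi : formula) (F : formula -> Prop) (a : formula) : Prop :=
  InCl phi a /\ F a.

Definition Req (phi : formula) (R : rel) (F : formula -> Prop) (a : formula) : Prop :=
  InCl phi a /\ F (Dia R a).

Definition leadsA (phi : formula) (F G : formula -> Prop) : Prop :=
  forall a, Req phi RA F a <->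
    (obs phi G a \/ Req phi RB G a \/ Req phi RBb G a).

Definition leadsB (phi : formula) (F G : formula -> Prop) : Prop :=
  (forall a, obs phi F a \/ Req phi RBb F a -> Req phi RBb G a) /\
  (forall a, Req phi RBb G a -> obs phi F a \/ Req phi RBb F a \/ Req phi RB F a) /\
  (forall a, obs phi G a \/ Req phi RB G a -> Req phi RB F a) /\
  (forall a, Req phi RB F a -> obs phi G a \/ Req phi RB G a \/ Req phi RBb G a).

Definition point := (nat * nat)%type.

Definition inP (N : nat) (p : point) : Prop := fst p < snd p /\ snd p < N.

Definition relP (R : rel) (p q : point) : Prop :=
  match R with
  | RA => snd p = fst q
  | RB => fst p = fst q /\ snd q < snd p
  | RBb => fst p = fst q /\ snd p < snd q
  end.

Definition leads (phi : formula) (R : rel) (F G : formula -> Prop) : Prop :=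
  match R with
  | RA => leadsA phi F G
  | RB => leadsB phi F G
  | RBb => True
  end.

(* phi-compass structure (P_N, L) of length N; L is only relevant on P_N *)
Definition compass (phi : formula) (N : nat) (L : point -> formula -> Prop) : Prop :=
  (forall p, inP N p -> atom phi (L p)) /\
  (forall R p q, R <> RBb -> inP N p -> inP N q -> relP R p q ->
     leads phi R (L p) (L q)) /\
  (forall R p a, inP N p -> Req phi R (L p) a ->
     exists q, inP N q /\ relP R p q /\ obs phi (L q) a).

Definition features (phi : formula) (N : nat) (L : point -> formula -> Prop) : Prop :=
  exists p, inP N p /\ L p (norm phi).

(* Shading(y0) subset of Shading(y1), atoms compared as subsets of Cl^+ *)
Definition shading_sub (L : point -> formula -> Prop) (y0 y1 : nat) : Prop :=
  forall x, x < y0 -> exists x', x' < y1 /\ forall a, L (x, y0) a <-> L (x', y1) a.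

(* Main.v *)
Require Import Defs.
From Stdlib Require Import List Arith Lia ClassicalEpsilon.

Definition eqv (F G : formula -> Prop) := forall a, F a <-> G a.

Lemma Req_eqv phi R F G a : eqv F G -> Req phi R F a -> Req phi R G a.
Proof. unfold Req, eqv; intros H [H1 H2]; split; [exact H1| apply H; exact H2]. Qed.

Lemma obs_eqv phi F G a : eqv F G -> obs phi F a -> obs phi G a.
Proof. unfold obs, eqv; intros H [H1 H2]; split; [exact H1| apply H; exact H2]. Qed.

Lemma eqv_sym F G : eqv F G -> eqv G F.
Proof. unfold eqv; intros H a; rewrite H; tauto. Qed.

Lemma leadsA_eqvl phi F F' G : eqv F F' -> leadsA phi F G -> leadsA phi F' G.
Proof.
  unfold leadsA; intros He H a; split; intro K.
  - apply H. apply (Req_eqv _ _ _ _ _ (eqv_sym _ _ He)), K.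
  - apply (Req_eqv _ _ _ _ _ He), H, K.
Qed.

Lemma leadsA_cv phi F G G' : leadsA phi F G ->
  (forall a, (obs phi G a \/ Req phi RB G a \/ Req phi RBb G a) <->
             (obs phi G' a \/ Req phi RB G' a \/ Req phi RBb G' a)) ->
  leadsA phi F G'.
Proof. unfold leadsA; intros H1 H2 a; rewrite H1; apply H2. Qed.

Lemma leadsB_cv phi F G : leadsB phi F G -> forall a,
  (obs phi F a \/ Req phi RB F a \/ Req phi RBb F a) <->
  (obs phi G a \/ Req phi RB G a \/ Req phi RBb G a).
Proof.
  intros [H1 [H2 [H3 H4]]] a; specialize (H1 a); specialize (H2 a);
  specialize (H3 a); specialize (H4 a); tauto.
Qed.

Lemma leadsB_trans phi F G H : leadsB phi F G -> leadsB phi G H -> leadsB phi F H.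
Proof.
  intros [A1 [A2 [A3 A4]]] [B1 [B2 [B3 B4]]].
  split; [|split; [|split]]; intro a;
  specialize (A1 a); specialize (A2 a); specialize (A3 a); specialize (A4 a);
  specialize (B1 a); specialize (B2 a); specialize (B3 a); specialize (B4 a); tauto.
Qed.

Lemma leadsB_eqvr phi F G G' : eqv G G' -> leadsB phi F G -> leadsB phi F G'.
Proof.
  intros He [A1 [A2 [A3 A4]]].
  assert (E1: forall a, obs phi G a <-> obs phi G' a) by
    (intro; split; apply obs_eqv; [|apply eqv_sym]; auto).
  assert (E2: forall R a, Req phi R G a <-> Req phi R G' a) by
    (intros; split; apply Req_eqv; [|apply eqv_sym]; auto).
  split; [|split; [|split]]; intro a;
  specialize (A1 a); specialize (A2 a); specialize (A3 a); specialize (A4 a);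
  rewrite <- ?E1, <- ?E2; tauto.
Qed.

Lemma InCl_self phi : InCl phi (norm phi).
Proof. exists (norm phi); split; [|left; reflexivity]. destruct (norm phi); simpl; left; reflexivity. Qed.

Theorem lemma2 (phi : formula) (N : nat) (L : point -> formula -> Prop) :
  compass phi N L ->
  (exists y, 0 < y < N /\ L (0, y) (norm phi)) ->
  (exists y0 y1, 0 < y0 < y1 /\ y1 < N /\ shading_sub L y0 y1) ->
  exists N' (L' : point -> formula -> Prop),
    N' < N /\ compass phi N' L' /\ features phi N' L'.
Proof.
  intros [Hat [Hcons Hful]] [y [Hy Hphi]] [y0 [y1 [Hy01 [Hy1N Hsh]]]].
  assert (Hg: exists g : nat -> nat, forall x, x < y0 ->
            g x < y1 /\ eqv (L (x, y0)) (L (g x, y1))).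
  { exists (fun x => match lt_dec x y0 with
       | left H => proj1_sig (constructive_indefinite_description _ (Hsh x H))
       | right _ => 0 end).
    intros x Hx. destruct (lt_dec x y0) as [H|H]; [|lia].
    destruct (constructive_indefinite_description _ (Hsh x H)) as [x' Hx']. exact Hx'. }
  destruct Hg as [g Hg].
  destruct (ex_intro (fun d => d = y1 - y0) _ eq_refl) as [d Hd].
  pose (h := fun x => if Nat.ltb x y0 then g x else if Nat.eqb x y0 then y1 else x + d).
  assert (hlt: forall x, x < y0 -> h x = g x).
  { intros x Hx; unfold h; destruct (Nat.ltb_spec x y0); [reflexivity|lia]. }
  assert (heq: h y0 = y1).
  { unfold h; destruct (Nat.ltb_spec y0 y0); [lia|]; rewrite Nat.eqb_refl; reflexivity. }
  assert (hgt: forall x, y0 < x -> h x = x + d).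
  { intros x Hx; unfold h; destruct (Nat.ltb_spec x y0); [lia|].
    destruct (Nat.eqb_spec x y0); [lia|reflexivity]. }
  pose (m := fun x y => if Nat.leb y y0 then (x, y) else (h x, y + d)).
  assert (mlo: forall x y, y <= y0 -> m x y = (x, y)).
  { intros x y' H; unfold m; destruct (Nat.leb_spec y' y0); [reflexivity|lia]. }
  assert (mhi: forall x y, y0 < y -> m x y = (h x, y + d)).
  { intros x y' H; unfold m; destruct (Nat.leb_spec y' y0); [lia|reflexivity]. }
  clearbody m h.
  assert (HB: forall x z z', z' < z -> x < z' -> z < N -> leadsB phi (L (x, z)) (L (x, z'))).
  { intros x z z' H1 H2 H3. apply (Hcons RB (x, z) (x, z')); try discriminate;
    unfold inP, relP; cbn; lia. }
  assert (HA: forall w x z, w < x -> x < z -> z < N -> leadsA phi (L (w, x)) (L (x, z))).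
  { intros w x z H1 H2 H3. apply (Hcons RA (w, x) (x, z)); try discriminate;
    unfold inP, relP; cbn; lia. }
  assert (HF: forall R x z a, x < z -> z < N -> Req phi R (L (x, z)) a ->
     exists u v, u < v /\ v < N /\ relP R (x, z) (u, v) /\ obs phi (L (u, v)) a).
  { intros R x z a H1 H2 H3. destruct (Hful R (x, z) a) as [[u v] [Hi [Hr Ho]]].
    - unfold inP; cbn; lia.
    - exact H3.
    - destruct Hi as [Hi1 Hi2]; cbn in Hi1, Hi2. exists u, v; auto. }
  exists (N - d), (fun p => L (m (fst p) (snd p))).
  split; [lia|]. split; [split; [|split]|].
  - intros [x y'] [H1 H2]; cbn in *. apply Hat.
    destruct (Nat.le_gt_cases y' y0) as [K|K].
    + rewrite mlo by exact K. unfold inP; cbn; lia.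
    + rewrite mhi by exact K. unfold inP; cbn.
      destruct (Nat.lt_total x y0) as [J|[J|J]].
      * rewrite hlt by exact J. specialize (Hg x J). lia.
      * subst x; rewrite heq; lia.
      * rewrite hgt by exact J; lia.
  - intros R [w x] [x' z] HR [P1 P2] [Q1 Q2] Hr; cbn in *.
    destruct R; [| | congruence]; cbn in Hr |- *.
    + subst x'.
      destruct (Nat.le_gt_cases z y0) as [K|K].
      { rewrite !mlo by lia. apply HA; lia. }
      destruct (Nat.lt_total x y0) as [J|[J|J]].
      * rewrite (mlo w x) by lia. rewrite (mhi x z) by lia. rewrite hlt by lia.
        destruct (Hg x J) as [Hg1 Hg2].
        apply (leadsA_cv _ _ (L (x, y0))); [apply HA; lia|].
        intro a. rewrite (leadsB_cv _ _ _ (HB (g x) (z + d) y1 ltac:(lia) Hg1 ltac:(lia)) a).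
        split; intros [T|[T|T]];
        [left; apply (obs_eqv _ _ _ _ Hg2) | right; left; apply (Req_eqv _ _ _ _ _ Hg2)
        | right; right; apply (Req_eqv _ _ _ _ _ Hg2)
        | left; apply (obs_eqv _ _ _ _ (eqv_sym _ _ Hg2))
        | right; left; apply (Req_eqv _ _ _ _ _ (eqv_sym _ _ Hg2))
        | right; right; apply (Req_eqv _ _ _ _ _ (eqv_sym _ _ Hg2))]; exact T.
      * subst x. rewrite (mlo w y0) by lia. rewrite (mhi y0 z) by lia. rewrite heq.
        destruct (Hg w P1) as [Hg1 Hg2].
        apply (leadsA_eqvl _ (L (g w, y1))); [apply eqv_sym, Hg2|].
        apply HA; lia.
      * rewrite (mhi w x) by lia. rewrite (mhi x z) by lia. rewrite (hgt x) by lia.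
        destruct (Nat.lt_total w y0) as [J'|[J'|J']].
        -- rewrite hlt by lia. destruct (Hg w J'). apply HA; lia.
        -- subst w. rewrite heq. apply HA; lia.
        -- rewrite hgt by lia. apply HA; lia.
    + destruct Hr as [Hr1 Hr2]; subst x'; rename w into c; rename x into w; rename c into x.
      destruct (Nat.le_gt_cases w y0) as [K|K].
      { rewrite !mlo by lia. apply HB; lia. }
      destruct (Nat.le_gt_cases z y0) as [K'|K'].
      * rewrite (mlo x z) by lia. rewrite (mhi x w) by lia. rewrite hlt by lia.
        destruct (Hg x ltac:(lia)) as [Hg1 Hg2].
        assert (B1: leadsB phi (L (g x, w + d)) (L (x, y0))).
        { apply (leadsB_eqvr _ _ (L (g x, y1))); [apply eqv_sym, Hg2|]. apply HB; lia. }
        destruct (Nat.lt_total z y0) as [J|[J|J]]; [|subst z; exact B1|lia].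
        apply (leadsB_trans _ _ _ _ B1). apply HB; lia.
      * rewrite !mhi by lia.
        assert (x < h x + 1 -> True) by auto.
        destruct (Nat.lt_total x y0) as [J'|[J'|J']].
        -- rewrite hlt by lia. destruct (Hg x J'). apply HB; lia.
        -- subst x. rewrite heq. apply HB; lia.
        -- rewrite hgt by lia. apply HB; lia.
  - intros R [x y'] a [P1 P2] HR; cbn in *.
    destruct (Nat.le_gt_cases y' y0) as [K|K].
    + rewrite mlo in HR by exact K.
      destruct R.
      * destruct (HF RA x y' a P1 ltac:(lia) HR) as [u [v [W1 [W2 [W3 W4]]]]].
        cbn in W3; subst u.
        destruct (Nat.le_gt_cases v y0) as [K2|K2].
        { exists (y', v); split; [unfold inP; cbn; lia|]; split; [reflexivity|].
          cbn; rewrite mlo by lia; exact W4. }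
        destruct (Nat.lt_total y' y0) as [J|[J|J]]; [| |lia].
        -- assert (R1: Req phi RBb (L (y', y0)) a).
           { apply (HB y' v y0 K2 J W2). left; exact W4. }
           destruct (Hg y' J) as [Hg1 Hg2].
           apply (Req_eqv _ _ _ _ _ Hg2) in R1.
           destruct (HF RBb (g y') y1 _ Hg1 Hy1N R1) as [u [v' [V1 [V2 [[V3 V4] V5]]]]].
           cbn in V3, V4; subst u.
           exists (y', v' - d); split; [unfold inP; cbn; lia|]; split; [reflexivity|].
           cbn; rewrite mhi by lia; rewrite hlt by lia.
           replace (v' - d + d) with v' by lia; exact V5.
        -- subst y'. destruct (Hg x P1) as [Hg1 Hg2].
           apply (Req_eqv _ _ _ _ _ Hg2) in HR.
           destruct (HF RA (g x) y1 _ Hg1 Hy1N HR) as [u [v' [V1 [V2 [V3 V5]]]]].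
           cbn in V3; subst u.
           exists (y0, v' - d); split; [unfold inP; cbn; lia|]; split; [reflexivity|].
           cbn; rewrite mhi by lia; rewrite heq.
           replace (v' - d + d) with v' by lia; exact V5.
      * destruct (HF RB x y' a P1 ltac:(lia) HR) as [u [v [W1 [W2 [[W3 W5] W4]]]]].
        cbn in W3, W5; subst u.
        exists (x, v); split; [unfold inP; cbn; lia|]; split; [cbn; lia|].
        cbn; rewrite mlo by lia; exact W4.
      * destruct (HF RBb x y' a P1 ltac:(lia) HR) as [u [v [W1 [W2 [[W3 W5] W4]]]]].
        cbn in W3, W5; subst u.
        destruct (Nat.le_gt_cases v y0) as [K2|K2].
        { exists (x, v); split; [unfold inP; cbn; lia|]; split; [cbn; lia|].
          cbn; rewrite mlo by lia; exact W4. }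
        assert (R1: Req phi RBb (L (x, y0)) a).
        { apply (HB x v y0 K2 ltac:(lia) W2). left; exact W4. }
        destruct (Hg x ltac:(lia)) as [Hg1 Hg2].
        apply (Req_eqv _ _ _ _ _ Hg2) in R1.
        destruct (HF RBb (g x) y1 _ Hg1 Hy1N R1) as [u [v' [V1 [V2 [[V3 V4] V5]]]]].
        cbn in V3, V4; subst u.
        exists (x, v' - d); split; [unfold inP; cbn; lia|]; split; [cbn; lia|].
        cbn; rewrite mhi by lia; rewrite hlt by lia.
        replace (v' - d + d) with v' by lia; exact V5.
    + rewrite mhi in HR by exact K.
      assert (Hhx: h x < y' + d).
      { destruct (Nat.lt_total x y0) as [J|[J|J]].
        - rewrite hlt by lia. destruct (Hg x J); lia.
        - subst x; rewrite heq; lia.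
        - rewrite hgt by lia; lia. }
      destruct R.
      * destruct (HF RA (h x) (y' + d) a Hhx ltac:(lia) HR) as [u [v [W1 [W2 [W3 W4]]]]].
        cbn in W3; subst u.
        exists (y', v - d); split; [unfold inP; cbn; lia|]; split; [reflexivity|].
        cbn; rewrite mhi by lia; rewrite hgt by lia.
        replace (v - d + d) with v by lia; exact W4.
      * destruct (HF RB (h x) (y' + d) a Hhx ltac:(lia) HR) as [u [v [W1 [W2 [[W3 W5] W4]]]]].
        cbn in W3, W5; subst u.
        destruct (Nat.le_gt_cases v y1) as [K2|K2].
        -- assert (J: x < y0).
           { destruct (Nat.lt_total x y0) as [J|[J|J]]; [exact J| |].
             - subst x; rewrite heq in W1; lia.
             - rewrite hgt in W1 by lia; lia. }
           rewrite hlt in W1, W4 by exact J.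
           destruct (Hg x J) as [Hg1 Hg2].
           destruct (Nat.lt_total v y1) as [J2|[J2|J2]]; [|subst v|lia].
           ++ assert (R1: Req phi RB (L (g x, y1)) a).
              { apply (HB (g x) y1 v J2 W1 Hy1N). left; exact W4. }
              apply (Req_eqv _ _ _ _ _ (eqv_sym _ _ Hg2)) in R1.
              destruct (HF RB x y0 _ J ltac:(lia) R1) as [u [v' [V1 [V2 [[V3 V4] V5]]]]].
              cbn in V3, V4; subst u.
              exists (x, v'); split; [unfold inP; cbn; lia|]; split; [cbn; lia|].
              cbn; rewrite mlo by lia; exact V5.
           ++ exists (x, y0); split; [unfold inP; cbn; lia|]; split; [cbn; lia|].
              cbn; rewrite mlo by lia. apply (obs_eqv _ _ _ _ (eqv_sym _ _ Hg2)); exact W4.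
        -- assert (J: x < v - d).
           { destruct (Nat.le_gt_cases x y0) as [J|J]; [lia|].
             rewrite hgt in W1 by lia; lia. }
           exists (x, v - d); split; [unfold inP; cbn; lia|]; split; [cbn; lia|].
           cbn; rewrite mhi by lia.
           replace (v - d + d) with v by lia; exact W4.
      * destruct (HF RBb (h x) (y' + d) a Hhx ltac:(lia) HR) as [u [v [W1 [W2 [[W3 W5] W4]]]]].
        cbn in W3, W5; subst u.
        exists (x, v - d); split; [unfold inP; cbn; lia|]; split; [cbn; lia|].
        cbn; rewrite mhi by lia.
        replace (v - d + d) with v by lia; exact W4.
  - destruct (Nat.le_gt_cases y y0) as [K|K].
    + exists (0, y); split; [unfold inP; cbn; lia|]. cbn; rewrite mlo by exact K; exact Hphi.
    + assert (R1: Req phi RBb (L (0, y0)) (norm phi)).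
      { apply (HB 0 y y0 K ltac:(lia) ltac:(lia)). left. split; [apply InCl_self|exact Hphi]. }
      destruct (Hg 0 ltac:(lia)) as [Hg1 Hg2].
      apply (Req_eqv _ _ _ _ _ Hg2) in R1.
      destruct (HF RBb (g 0) y1 _ Hg1 Hy1N R1) as [u [v [W1 [W2 [[W3 W4] [_ W5]]]]]].
      cbn in W3, W4; subst u.
      exists (0, v - d); split; [unfold inP; cbn; lia|]. cbn.
      rewrite mhi by lia. rewrite hlt by lia. replace (v - d + d) with v by lia. exact W5.
Qed.
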